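(* Let $n,d,d_k$ be positive integers, $X\in\mathbb{R}^{n\times d}$, $W_Q,W_K\in\mathbb{R}^{d\times d_k}$, $E\in\mathbb{R}^{n\times n}$, and let $P\in\mathbb{R}^{d\times d}$ be an orthogonal projector ($P=P^\top=P^2$). Put $B=W_QW_K^\top$, $X_P=XP$, $$G_Q=\frac{X^\top E X W_K}{\sqrt{d_k}},\qquad G_K=\frac{X^\top E^\top X W_Q}{\sqrt{d_k}}.$$ For real step sizes $\eta_Q,\eta_K\ge 0$ let $W_Q^+=W_Q-\eta_QG_Q$, $W_K^+=W_K-\eta_KG_K$, $B^+=W_Q^+(W_K^+)^\top$, and $$\Delta Z_P=\frac{X_P\,P(B^+-B)P\,X_P^\top}{\sqrt{d_k}}.$$ Then $$\|\Delta Z_P\|_F\le \frac{\|X_P\|_{\mathrm{op}}^2\|X_P\|_F\|E\|_{\mathrm{op}}}{d_k}\Big(\eta_Q\|XW_KW_K^\top P\|_F+\eta_K\|XW_QW_Q^\top P\|_F\Big)+R_2,$$ where $$R_2=\frac{\eta_Q\eta_K\|X_P\|_{\mathrm{op}}^2\|X_P\|_F^2\|E\|_{\mathrm{op}}^2\|XW_K\|_F\|XW_Q\|_F}{d_k^{3/2}}.$$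
   Context: $\|\cdot\|_F$ denotes the Frobenius norm and $\|\cdot\|_{\mathrm{op}}$ the spectral (operator) norm. Interpretation: $X$ is the normalized residual stream entering an attention head with logits $Z=XBX^\top/\sqrt{d_k}$, $P$ projects onto ''immature'' residual directions, $E$ plays the role of $\partial\mathcal{L}/\partial Z$, and $G_Q,G_K$ are then the gradients of the loss with respect to $W_Q,W_K$; $\Delta Z_P$ is the change of the immature-to-immature logit component $Z_P=X_P PBP X_P^\top/\sqrt{d_k}$ after one gradient step. *)

(* Defs.v *)
From HB Require Import structures.
From mathcomp Require Import all_boot all_order all_algebra.
From mathcomp Require Import boolp classical_sets reals.
Set Implicit Arguments. Unset Strict Implicit. Unset Printing Implicit Defensive.
Import Order.TTheory GRing.Theory Num.Theory.
Local Open Scope ring_scope.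
Local Open Scope classical_set_scope.

Definition frob (R : realType) (m n : nat) (A : 'M[R]_(m, n)) : R :=
  Num.sqrt (\sum_(i < m) \sum_(j < n) A i j ^+ 2).

Definition vnorm (R : realType) (n : nat) (v : 'cV[R]_n) : R :=
  Num.sqrt (\sum_(i < n) v i 0 ^+ 2).

Definition opnorm (R : realType) (m n : nat) (A : 'M[R]_(m, n)) : R :=
  sup [set vnorm (A *m v) | v in [set v : 'cV[R]_n | vnorm v <= 1]].

(* Main.v *)
Require Import Defs.
From HB Require Import structures.
From mathcomp Require Import all_boot all_order all_algebra.
From mathcomp Require Import boolp classical_sets reals.
From mathcomp Require Import lra ring.
Import Order.TTheory GRing.Theory Num.Theory.
Set Implicit Arguments. Unset Strict Implicit.
Local Open Scope ring_scope.

Section Norms.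
Variable R : realType.

Lemma sumsq_ge0 (I : finType) (f : I -> R) : 0 <= \sum_i f i ^+ 2.
Proof. by apply: sumr_ge0 => i _; exact: sqr_ge0. Qed.

Lemma cs_sum (I : finType) (f g : I -> R) :
  (\sum_i f i * g i) ^+ 2 <= (\sum_i f i ^+ 2) * (\sum_i g i ^+ 2).
Proof.
have B0 : 0 <= \sum_i g i ^+ 2 by apply: sumsq_ge0.
have key : 0 <= (\sum_i g i ^+ 2) * ((\sum_i f i ^+ 2) * (\sum_i g i ^+ 2) - (\sum_i f i * g i) ^+ 2).
  have -> : (\sum_i g i ^+ 2) * ((\sum_i f i ^+ 2) * (\sum_i g i ^+ 2) - (\sum_i f i * g i) ^+ 2)
     = \sum_i (f i * (\sum_i g i ^+ 2) - g i * (\sum_i f i * g i)) ^+ 2.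
    set A := \sum_i f i ^+ 2; set B := \sum_i g i ^+ 2; set C := \sum_i f i * g i.
    have -> : \sum_i (f i * B - g i * C) ^+ 2 =
       \sum_i (B ^+ 2 * f i ^+ 2 - (2 * B * C) * (f i * g i) + C ^+ 2 * g i ^+ 2).
      by apply: eq_bigr => i _; ring.
    rewrite big_split /= sumrB -!mulr_sumr -/A -/B -/C; ring.
  by apply: sumsq_ge0.
have [Bpos|] := ltrP 0 (\sum_i g i ^+ 2).
  by rewrite pmulr_rge0 // subr_ge0 in key.
move=> Ble; have B00 : \sum_i g i ^+ 2 = 0 by apply/eqP; rewrite eq_le Ble B0.
have g0 : forall i, g i = 0.
  move=> i; apply/eqP; rewrite -sqrf_eq0; apply/eqP.
  by apply: (psumr_eq0P _ B00) => // j _; exact: sqr_ge0.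
rewrite B00 mulr0 big1 ?expr0n //= => i _; by rewrite g0 mulr0.
Qed.

Lemma cs_sqrt (I : finType) (f g : I -> R) :
  \sum_i f i * g i <= Num.sqrt (\sum_i f i ^+ 2) * Num.sqrt (\sum_i g i ^+ 2).
Proof.
rewrite -sqrtrM ?sumsq_ge0 //.
apply: (le_trans (ler_norm _)); rewrite -sqrtr_sqr ler_sqrt ?cs_sum //.
by rewrite mulr_ge0 ?sumsq_ge0.
Qed.

Lemma nrm_add (I : finType) (f g : I -> R) :
  Num.sqrt (\sum_i (f i + g i) ^+ 2) <=
  Num.sqrt (\sum_i f i ^+ 2) + Num.sqrt (\sum_i g i ^+ 2).
Proof.
have h0 : 0 <= Num.sqrt (\sum_i f i ^+ 2) + Num.sqrt (\sum_i g i ^+ 2).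
  by rewrite addr_ge0 ?sqrtr_ge0.
rewrite -(ger0_norm h0) -sqrtr_sqr ler_sqrt ?sqr_ge0 //.
have -> : \sum_i (f i + g i) ^+ 2 = \sum_i f i ^+ 2 + 2 * \sum_i f i * g i + \sum_i g i ^+ 2.
  rewrite mulr_sumr -!big_split /=; apply: eq_bigr => i _; ring.
have := cs_sqrt f g.
have := sqr_sqrtr (sumsq_ge0 f); have := sqr_sqrtr (sumsq_ge0 g).
set a := Num.sqrt _; set b := Num.sqrt _ => ha hb hc.
rewrite -ha -hb. nra.
Qed.


Lemma frobE m n (A : 'M[R]_(m, n)) :
  frob A = Num.sqrt (\sum_(p : 'I_m * 'I_n) A p.1 p.2 ^+ 2).
Proof. by rewrite /frob pair_bigA. Qed.

Lemma frob_ge0 m n (A : 'M[R]_(m, n)) : 0 <= frob A.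
Proof. exact: sqrtr_ge0. Qed.

Lemma frob_add m n (A B : 'M[R]_(m, n)) : frob (A + B) <= frob A + frob B.
Proof.
rewrite !frobE; under eq_bigr do rewrite mxE.
exact: (nrm_add (fun p : 'I_m * 'I_n => A p.1 p.2) (fun p => B p.1 p.2)).
Qed.

Lemma frob_scale m n (c : R) (A : 'M[R]_(m, n)) : frob (c *: A) = `|c| * frob A.
Proof.
rewrite !frobE; under eq_bigr do rewrite mxE exprMn.
by rewrite -mulr_sumr sqrtrM ?sqr_ge0 // sqrtr_sqr.
Qed.

Lemma frob_opp m n (A : 'M[R]_(m, n)) : frob (- A) = frob A.
Proof. by rewrite -scaleN1r frob_scale normrN normr1 mul1r. Qed.

Lemma frob_tr m n (A : 'M[R]_(m, n)) : frob A^T = frob A.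
Proof.
rewrite /frob exchange_big /=; congr Num.sqrt; apply: eq_bigr => i _.
by apply: eq_bigr => j _; rewrite mxE.
Qed.

Lemma vnorm_frob n (v : 'cV[R]_n) : vnorm v = frob v.
Proof.
rewrite /vnorm /frob; congr Num.sqrt; apply: eq_bigr => i _.
by rewrite big_ord1.
Qed.

Lemma vnorm_mul m n (A : 'M[R]_(m, n)) (v : 'cV[R]_n) :
  vnorm (A *m v) <= frob A * vnorm v.
Proof.
have hA : 0 <= \sum_i \sum_j A i j ^+ 2 by apply: sumr_ge0 => i _; apply: sumsq_ge0.
rewrite /frob /vnorm -sqrtrM // ler_sqrt; last by rewrite mulr_ge0 ?sumsq_ge0.
rewrite mulr_suml; apply: ler_sum => i _; rewrite mxE.
exact: (cs_sum (fun j => A i j) (fun j => v j 0)).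
Qed.

Definition opset m n (A : 'M[R]_(m, n)) :=
  [set vnorm (A *m v) | v in [set v : 'cV[R]_n | vnorm v <= 1]]%classic.

Lemma opset_has_sup m n (A : 'M[R]_(m, n)) : has_sup (opset A).
Proof.
split.
  exists (vnorm (A *m 0)); exists 0 => //=.
  by rewrite /vnorm big1 ?sqrtr0 // => i _; rewrite mxE expr0n.
exists (frob A) => x [v /= hv <-].
apply: (le_trans (vnorm_mul A v)).
by rewrite ler_piMr ?frob_ge0.
Qed.

Lemma opnorm_ge0 m n (A : 'M[R]_(m, n)) : 0 <= opnorm A.
Proof.
have := sup_upper_bound (opset_has_sup A); apply => /=.
exists 0; first by rewrite /= /vnorm big1 ?sqrtr0 // => i _; rewrite mxE expr0n.
by rewrite mulmx0 /vnorm big1 ?sqrtr0 // => i _; rewrite mxE expr0n.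
Qed.

Lemma opnorm_le_frob m n (A : 'M[R]_(m, n)) : opnorm A <= frob A.
Proof.
apply: ge_sup; first by case: (opset_has_sup A).
move=> x [v /= hv <-].
apply: (le_trans (vnorm_mul A v)).
by rewrite ler_piMr ?frob_ge0.
Qed.

Lemma opnorm_ub m n (A : 'M[R]_(m, n)) (v : 'cV[R]_n) :
  vnorm (A *m v) <= opnorm A * vnorm v.
Proof.
have [vp|] := ltrP 0 (vnorm v); last first.
  move=> vle; have v0 : vnorm v = 0 by apply/eqP; rewrite eq_le vle /vnorm sqrtr_ge0.
  rewrite v0 mulr0; apply: (le_trans (vnorm_mul A v)); by rewrite v0 mulr0.
have vp' := ltW vp.
have hw : vnorm ((vnorm v)^-1 *: v) <= 1.
  rewrite vnorm_frob frob_scale -vnorm_frob ger0_norm; last by rewrite invr_ge0.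
  by rewrite mulVf // gt_eqF.
have hmem : opset A (vnorm (A *m ((vnorm v)^-1 *: v))) by exists ((vnorm v)^-1 *: v).
have := sup_upper_bound (opset_has_sup A) hmem.
rewrite -scalemxAr vnorm_frob frob_scale -vnorm_frob ger0_norm; last by rewrite invr_ge0.
by rewrite ler_pdivrMl // mulrC.
Qed.

Lemma frob_mull m n p (A : 'M[R]_(m, n)) (B : 'M[R]_(n, p)) :
  frob (A *m B) <= opnorm A * frob B.
Proof.
have e1 : forall (C : 'M[R]_(m,p)), frob C = Num.sqrt (\sum_j vnorm (col j C) ^+ 2).
  move=> C; rewrite /frob exchange_big /=; congr Num.sqrt; apply: eq_bigr => j _.
  rewrite sqr_sqrtr ?sumsq_ge0 //; by apply: eq_bigr => i _; rewrite mxE.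
have e2 : forall (C : 'M[R]_(n,p)), frob C = Num.sqrt (\sum_j vnorm (col j C) ^+ 2).
  move=> C; rewrite /frob exchange_big /=; congr Num.sqrt; apply: eq_bigr => j _.
  rewrite sqr_sqrtr ?sumsq_ge0 //; by apply: eq_bigr => i _; rewrite mxE.
have ec : forall j, col j (A *m B) = A *m col j B.
  by move=> j; apply/matrixP => i k; rewrite !mxE; apply: eq_bigr => l _; rewrite !mxE.
rewrite e1 e2 -(ger0_norm (opnorm_ge0 A)) -sqrtr_sqr -sqrtrM ?sqr_ge0 //.
rewrite ler_sqrt; last by rewrite mulr_ge0 ?sqr_ge0 ?sumsq_ge0.
rewrite mulr_sumr; apply: ler_sum => j _; rewrite ec -exprMn.
rewrite ler_pXn2r // ?nnegrE ?sqrtr_ge0 ?mulr_ge0 ?opnorm_ge0 ?sqrtr_ge0 //.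
exact: opnorm_ub.
Qed.

Lemma frob_mul m n p (A : 'M[R]_(m, n)) (B : 'M[R]_(n, p)) :
  frob (A *m B) <= frob A * frob B.
Proof.
apply: (le_trans (frob_mull A B)).
by rewrite ler_wpM2r ?frob_ge0 ?opnorm_le_frob.
Qed.

End Norms.

Unset Implicit Arguments.
Unset Strict Implicit.

Theorem theorem1 (R : realType) (n d dk : nat)
  (hn : (0 < n)%N) (hd : (0 < d)%N) (hdk : (0 < dk)%N)
  (X : 'M[R]_(n, d)) (WQ WK : 'M[R]_(d, dk)) (E : 'M[R]_n) (P : 'M[R]_d)
  (hPsym : P^T = P) (hPidem : P *m P = P)
  (etaQ etaK : R) (hetaQ : 0 <= etaQ) (hetaK : 0 <= etaK) :
  let sdk := Num.sqrt (dk%:R : R) in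
  let B := WQ *m WK^T in
  let XP := X *m P in
  let GQ := sdk^-1 *: (X^T *m E *m X *m WK) in
  let GK := sdk^-1 *: (X^T *m E^T *m X *m WQ) in
  let WQp := WQ - etaQ *: GQ in
  let WKp := WK - etaK *: GK in
  let Bp := WQp *m WKp^T in
  let dZP := sdk^-1 *: (XP *m (P *m (Bp - B) *m P) *m XP^T) in
  let R2 := etaQ * etaK * opnorm XP ^+ 2 * frob XP ^+ 2 * opnorm E ^+ 2
            * frob (X *m WK) * frob (X *m WQ) / (dk%:R * sdk) in
  frob dZP <=
    opnorm XP ^+ 2 * frob XP * opnorm E / dk%:R
      * (etaQ * frob (X *m WK *m WK^T *m P) + etaK * frob (X *m WQ *m WQ^T *m P))
    + R2.
Proof.
cbv zeta.
set sdk := Num.sqrt (dk%:R : R).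
set XP := X *m P.
set u := sdk^-1.
set G1 := X^T *m E *m X *m WK.
set G2 := X^T *m E^T *m X *m WQ.
set B := WQ *m WK^T.
set Bp := (WQ - etaQ *: (u *: G1)) *m (WK - etaK *: (u *: G2))^T.
set dZP := u *: _.
have s0 : 0 < sdk by rewrite sqrtr_gt0 ltr0n.
have ss : sdk ^+ 2 = dk%:R by rewrite sqr_sqrtr // ler0n.
have XPP : XP *m P = XP by rewrite /XP -mulmxA hPidem.
have XPt : XP^T = P *m X^T by rewrite /XP trmx_mul hPsym.
have PXPt : P *m XP^T = XP^T by rewrite XPt mulmxA hPidem.
have XPXt : XP *m X^T = XP *m XP^T by rewrite XPt mulmxA XPP.
have XXPt : X *m XP^T = XP *m XP^T by rewrite XPt !mulmxA XPP.
set G2t := WQ^T *m X^T *m E *m X.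
have hBd : Bp - B = - ((etaK * u) *: (WQ *m G2t)) - (etaQ * u) *: (G1 *m WK^T)
                   + ((etaQ * u) * (etaK * u)) *: (G1 *m G2t).
  have hG2 : G2^T = G2t by rewrite /G2 /G2t !trmx_mul !trmxK !mulmxA.
  rewrite /Bp /B raddfB /= !linearZ /= !linearZ /= hG2.
  rewrite mulmxDl !mulmxDr -!scalemxAl -!scalemxAr !mulmxN !mulNmx !scalerN !opprK !scalerA.
  by rewrite (mulrC u etaK) (mulrC u etaQ) addrC !addrA addNr add0r.
have mulmxPP : forall m (A : 'M[R]_(m, d)), A *m P *m P = A *m P.
  by move=> m A; rewrite -mulmxA hPidem.
set M := X *m WK *m WK^T *m P.
set M' := X *m WQ *m WQ^T *m P.
set TQ := XP *m XP^T *m E *m M *m XP^T.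
set TK := XP *m M'^T *m E *m XP *m XP^T.
set TQK := XP *m XP^T *m E *m (X *m WK) *m (X *m WQ)^T *m E *m XP *m XP^T.
have hdZ : dZP = - ((u * (etaK * u)) *: TK) - (u * (etaQ * u)) *: TQ
              + (u * (etaQ * u * (etaK * u))) *: TQK.
  rewrite /dZP hBd.
  rewrite !mulmxDr !mulmxDl !mulmxN !mulNmx -!scalemxAr -!scalemxAl.
  rewrite !mulmxDr !mulmxDl !mulmxN !mulNmx -!scalemxAr -!scalemxAl ?scalerN !scalerDr ?scalerN !scalerA.
  rewrite /TK /TQ /TQK /M /M' /XP /G1 /G2t !trmx_mul !trmxK hPsym !mulmxA !mulmxPP.
  done.
have eQ : TQ = XP *m (XP^T *m (E *m (M *m XP^T))) by rewrite /TQ !mulmxA.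
have eK : TK = XP *m (M'^T *m (E *m (XP *m XP^T))) by rewrite /TK !mulmxA.
have eQK : TQK = XP *m (XP^T *m (E *m (X *m WK *m ((X *m WQ)^T *m (E *m (XP *m XP^T)))))).
  by rewrite /TQK !mulmxA.
clearbody TQ TK TQK M M' XP.
have op0 : 0 <= (opnorm XP) by apply: opnorm_ge0.
have F0 : 0 <= (frob XP) by apply: frob_ge0.
have oE0 : 0 <= (opnorm E) by apply: opnorm_ge0.
have b1 : frob (M *m XP^T) <= (opnorm XP) * frob M.
  by rewrite -frob_tr trmx_mul trmxK -(frob_tr M); apply: frob_mull.
have b2 : frob (E *m (M *m XP^T)) <= (opnorm E) * ((opnorm XP) * frob M).
  exact: (le_trans (frob_mull _ _) (ler_wpM2l oE0 b1)).
have b3 : frob (XP^T *m (E *m (M *m XP^T))) <= (frob XP) * ((opnorm E) * ((opnorm XP) * frob M)).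
  apply: (le_trans (frob_mul _ _)); rewrite frob_tr.
  exact: (ler_wpM2l (frob_ge0 XP) b2).
have bQ : frob TQ <= (opnorm XP) * ((frob XP) * ((opnorm E) * ((opnorm XP) * frob M))).
  rewrite eQ; exact: (le_trans (frob_mull _ _) (ler_wpM2l op0 b3)).
have c1 : frob (XP *m XP^T) <= (opnorm XP) * (frob XP).
  by apply: (le_trans (frob_mull _ _)); rewrite frob_tr.
have c2 : frob (E *m (XP *m XP^T)) <= (opnorm E) * ((opnorm XP) * (frob XP)).
  exact: (le_trans (frob_mull _ _) (ler_wpM2l oE0 c1)).
have c3 : frob (M'^T *m (E *m (XP *m XP^T))) <= frob M' * ((opnorm E) * ((opnorm XP) * (frob XP))).
  apply: (le_trans (frob_mul _ _)); rewrite frob_tr.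
  have M'0 : 0 <= frob M' by apply: frob_ge0.
  apply: (ler_wpM2l M'0). exact: c2.
have bK : frob TK <= (opnorm XP) * (frob M' * ((opnorm E) * ((opnorm XP) * (frob XP)))).
  rewrite eK; exact: (le_trans (frob_mull _ _) (ler_wpM2l op0 c3)).
have d2 : frob ((X *m WQ)^T *m (E *m (XP *m XP^T))) <= frob (X *m WQ) * ((opnorm E) * ((opnorm XP) * (frob XP))).
  apply: (le_trans (frob_mul _ _)); rewrite frob_tr.
  have Q0 : 0 <= frob (X *m WQ) by apply: frob_ge0.
  apply: (ler_wpM2l Q0). exact: c2.
have d3 : frob (X *m WK *m ((X *m WQ)^T *m (E *m (XP *m XP^T))))
    <= frob (X *m WK) * (frob (X *m WQ) * ((opnorm E) * ((opnorm XP) * (frob XP)))).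
  apply: (le_trans (frob_mul _ _)); have K0 : 0 <= frob (X *m WK) by apply: frob_ge0.
  apply: (ler_wpM2l K0). exact: d2.
have d4 : frob (E *m (X *m WK *m ((X *m WQ)^T *m (E *m (XP *m XP^T)))))
    <= (opnorm E) * (frob (X *m WK) * (frob (X *m WQ) * ((opnorm E) * ((opnorm XP) * (frob XP))))).
  exact: (le_trans (frob_mull _ _) (ler_wpM2l oE0 d3)).
have d5 : frob (XP^T *m (E *m (X *m WK *m ((X *m WQ)^T *m (E *m (XP *m XP^T))))))
    <= (frob XP) * ((opnorm E) * (frob (X *m WK) * (frob (X *m WQ) * ((opnorm E) * ((opnorm XP) * (frob XP)))))).
  apply: (le_trans (frob_mul _ _)); rewrite frob_tr; apply: (ler_wpM2l F0). exact: d4.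
have bQK : frob TQK <= (opnorm XP) * ((frob XP) * ((opnorm E) * (frob (X *m WK) * (frob (X *m WQ) * ((opnorm E) * ((opnorm XP) * (frob XP))))))).
  rewrite eQK; exact: (le_trans (frob_mull _ _) (ler_wpM2l op0 d5)).
have u0 : 0 <= u by rewrite invr_ge0 ltW.
have a0 : 0 <= u * (etaK * u) by rewrite !mulr_ge0.
have b0 : 0 <= u * (etaQ * u) by rewrite !mulr_ge0.
have c0 : 0 <= u * (etaQ * u * (etaK * u)) by rewrite !mulr_ge0.
have main : frob dZP <= u * (etaK * u) * frob TK + u * (etaQ * u) * frob TQ
                        + u * (etaQ * u * (etaK * u)) * frob TQK.
  rewrite hdZ; apply: (le_trans (frob_add _ _)); apply: lerD.
    apply: (le_trans (frob_add _ _)).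
    by rewrite !frob_opp !frob_scale !ger0_norm.
  by rewrite frob_scale ger0_norm.
apply: (le_trans main).
apply: (@le_trans _ _ (u * (etaK * u) * ((opnorm XP) * (frob M' * ((opnorm E) * ((opnorm XP) * (frob XP)))))
   + u * (etaQ * u) * ((opnorm XP) * ((frob XP) * ((opnorm E) * ((opnorm XP) * frob M))))
   + u * (etaQ * u * (etaK * u)) * ((opnorm XP) * ((frob XP) * ((opnorm E) * (frob (X *m WK) * (frob (X *m WQ) * ((opnorm E) * ((opnorm XP) * (frob XP)))))))))).
  apply: lerD; first apply: lerD.
  - apply: (ler_wpM2l a0); exact: bK.
  - apply: (ler_wpM2l b0); exact: bQ.
  - apply: (ler_wpM2l c0); exact: bQK.
rewrite le_eqVlt; apply/orP; left; apply/eqP.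
have sn0 : sdk != 0 by rewrite gt_eqF.
rewrite -ss /u; field.
by rewrite sn0.
Qed.
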